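(* For any non-null classifier $\delta$, any $t\ge0$, any $F$ satisfying the assumptions below, and any $\phi\in(\tfrac12,1]$, the reward $r^*=k_\mu^*(t,F)/\rho(\delta,\phi)$ is a Condorcet winner: for every other reward $r\in\mathbb{R}$, a majority of individuals (a set of measure at least one half) prefers $r^*$ to $r$, where each individual evaluates rewards by the payoff $U_i(\cdot)$ below.
   Context: A unit mass of individuals $i\in[0,1]$ have privately known costs $\gamma_i\in\mathbb{R}$ of choosing $\beta_i=1$ (compliance) rather than $\beta_i=0$, distributed according to a continuously differentiable CDF $F$ with log-concave density $f$ of full support on $\mathbb{R}$. A classifier $\delta=(\delta_1,\delta_0)\in[0,1]^2$ assigns $d_i$ with $\Pr[d_i=s_i\mid s_i]=\delta_{s_i}$, where $\Pr[s_i=\beta_i]=\phi$. Let $\rho=\rho(\delta,\phi)=(\delta_1+\delta_0-1)(2\phi-1)$; $\delta$ is non-null if $\rho\neq0$. Individuals with $d_i=1$ receive reward $r$, financed by an equal tax on all (budget balance), and each gets $t\pi$ with $\pi=F(r\rho)$ the compliance rate (individuals comply iff $\gamma_i\le r\rho$). Individual $i$'s payoff from reward $r$ is $U_i(r)=-\gamma_i+r\rho(1-F(r\rho))+tF(r\rho)$ if $\gamma_i\le r\rho$, and $U_i(r)=-r\rho F(r\rho)+tF(r\rho)$ otherwise. Define $k_0,k_1$ by $k_0=t-\frac{F(k_0)}{f(k_0)}$, $k_1=t+\frac{1-F(k_1)}{f(k_1)}$, and for an individual with cost $\gamma$ let $k^*(\gamma)=k_1$ if $\gamma\le k_0F(k_0)+k_1(1-F(k_1))+t(F(k_1)-F(k_0))$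 and $k_0$ otherwise. The median individual $\mu$ has cost $\gamma_\mu$ with $F(\gamma_\mu)=\tfrac12$, and $k_\mu^*(t,F)=k^*(\gamma_\mu)$. *)

(* Defs.v *)
From mathcomp Require Import all_boot all_order all_algebra.
From mathcomp Require Import all_classical all_reals all_analysis.
Set Implicit Arguments. Unset Strict Implicit. Unset Printing Implicit Defensive.
Import Order.TTheory GRing.Theory Num.Theory.
Import numFieldNormedType.Exports.
Local Open Scope ring_scope.
Local Open Scope classical_set_scope.

Section Defs.
Variable R : realType.

Definition rho (d1 d0 phi : R) : R := (d1 + d0 - 1) * (2 * phi - 1).

(* Payoff U_i(r) of an individual with cost gamma, given the CDF F,
   the (lump-sum) transfer parameter t and rho. *)
Definition payoff (F : R -> R) (t rh gamma r : R) : R :=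
  if gamma <= r * rh
  then - gamma + r * rh * (1 - F (r * rh)) + t * F (r * rh)
  else - (r * rh * F (r * rh)) + t * F (r * rh).

Definition kstar (F : R -> R) (t k0 k1 gamma : R) : R :=
  if gamma <= k0 * F k0 + k1 * (1 - F k1) + t * (F k1 - F k0) then k1 else k0.

Definition log_concave (f : R -> R) : Prop :=
  forall x y l : R, 0 <= l <= 1 ->
    l * ln (f x) + (1 - l) * ln (f y) <= ln (f (l * x + (1 - l) * y)).

Definition good_cdf (F f : R -> R) : Prop :=
  {homo F : x y / x <= y} /\
  F x @[x --> -oo] --> (0 : R) /\
  F x @[x --> +oo] --> (1 : R) /\
  (forall x : R, is_derive x (1 : R) F (f x)) /\
  continuous f /\
  (forall x, 0 < f x) /\
  log_concave f.

Definition mass_prefer (F f : R -> R) (t rh r1 r2 : R) : \bar R :=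
  (\int[@lebesgue_measure R]_(g in [set g | (payoff F t rh g r2 <= payoff F t rh g r1)%R])
      (f g)%:E)%E.

End Defs.

(* Main.v *)
Require Import Defs.
From mathcomp Require Import all_boot all_order all_algebra.
From mathcomp Require Import all_classical all_reals all_analysis.
From mathcomp Require Import ring lra measurable_realfun.
Import Order.TTheory GRing.Theory Num.Theory.
Import numFieldNormedType.Exports.
Local Open Scope ring_scope.
Local Open Scope classical_set_scope.

Lemma tail_Ny (R : realType) (F : R -> R) : F x @[x --> -oo] --> (0:R) ->
  forall e, 0 < e -> forall x0, exists z, z < x0 /\ `|F z| < e.
Proof.
move=> H e he x0.
have := (cvgrPdist_lt _ _).1 H e he.
move=> [M [_ HM]].
exists (Num.min (M - 1) (x0 - 1)); split.
  rewrite gt_min; apply/orP; right; lra.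
have : `|0 - F (Num.min (M - 1) (x0 - 1))| < e.
  apply: HM; rewrite gt_min; apply/orP; left; lra.
by rewrite sub0r normrN.
Qed.

Lemma tail_y (R : realType) (F : R -> R) (l : R) : F x @[x --> +oo] --> l ->
  forall e, 0 < e -> forall x0, exists z, x0 < z /\ `|l - F z| < e.
Proof.
move=> H e he x0.
have := (cvgrPdist_lt _ _).1 H e he.
move=> [M [_ HM]].
exists (Num.max (M + 1) (x0 + 1)); split.
  rewrite lt_max; apply/orP; right; lra.
have : `|l - F (Num.max (M + 1) (x0 + 1))| < e.
  apply: HM; rewrite lt_max; apply/orP; left; lra.
by [].
Qed.

Lemma F_bounds (R : realType) (F f : R -> R) : good_cdf F f -> forall x, 0 <= F x <= 1.
Proof.
move=> [mon [l0 [l1 _]]] x; apply/andP; split.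
  rewrite leNgt; apply/negP => Fx.
  have [z [zx Fz]] := @tail_Ny _ _ l0 (- F x) ltac:(lra) x.
  have := mon z x (ltW zx); move: Fz => /ltr_normlP [? ?]; lra.
rewrite leNgt; apply/negP => Fx.
have [z [zx Fz]] := @tail_y _ _ _ l1 (F x - 1) ltac:(lra) x.
have := mon x z (ltW zx); move: Fz => /ltr_normlP [? ?]; lra.
Qed.
Lemma lc_prod (R : realType) (f : R -> R) : (forall x, 0 < f x) -> log_concave f ->
  forall a b c e : R, a <= b -> b <= c -> b + e = a + c -> f a * f c <= f b * f e.
Proof.
move=> fp lc a b c e ab bc be.
have [ac|] := eqVneq a c.
  have hb : b = a by apply/eqP; rewrite eq_le ab; rewrite ac bc.
  have he : e = a by lra.
  by rewrite hb he ac.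
move=> nac.
have lac : a < c by rewrite lt_neqAle nac (le_trans ab bc).
pose l := (c - b) / (c - a).
have cap : 0 < c - a by lra.
have l01 : 0 <= l <= 1.
  apply/andP; split; first by rewrite /l divr_ge0 //; lra.
  by rewrite /l ler_pdivrMr //; lra.
have l01' : 0 <= 1 - l <= 1 by move: l01 => /andP[? ?]; apply/andP; split; lra.
have hb : l * a + (1 - l) * c = b.
  rewrite /l; field; lra.
have he : (1 - l) * a + (1 - (1 - l)) * c = e.
  have -> : e = a + c - b by lra.
  rewrite /l; field; lra.
have H1 := lc a c l l01.
have H2 := lc a c (1 - l) l01'.
rewrite hb in H1; rewrite he in H2.
rewrite -ler_ln ?posrE ?mulr_gt0 // !lnM ?posrE //.
lra.
Qed.
Lemma dshift (R : realType) (F f : R -> R) (a b d : R) :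
  (forall z : R, is_derive z 1 F (f z)) -> 
  forall z : R, is_derive z 1 (fun z : R => a * F (z + d) - b * F z) (a * f (z + d) - b * f z).
Proof.
move=> dF z.
have dsh : is_derive z 1 (fun z : R => z + d) 1.
  have := is_deriveD (is_derive_id z (1:R)) (is_derive_cst d z 1).
  by rewrite addr0.
have h1 : is_derive z 1 (F \o (fun z : R => z + d)) (f (z + d) * 1).
  exact: is_derive1_comp.
rewrite mulr1 in h1.
have h2 := is_deriveZ a h1.
have h3 := is_deriveZ b (dF z).
have := is_deriveB h2 h3.
done.
Qed.
Lemma mvt (R : realType) (g dg : R -> R) (a b : R) : a < b ->
  (forall x : R, is_derive x 1 g (dg x)) ->
  exists2 c, a < c < b & g b - g a = dg c * (b - a).
Proof.
move=> ab dg_.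
have cg : {within `[a, b], continuous g}.
  apply: derivable_within_continuous => x _.
  have := dg_ x; by case.
have [c cin ->] := MVT ab (fun x _ => dg_ x) cg.
by exists c => //; move: cin; rewrite in_itv.
Qed.

Lemma ratio1 (R : realType) (F f : R -> R) : good_cdf F f ->
  forall x y, x < y -> F x * f y <= F y * f x.
Proof.
move=> gc; have [mon [l0 [l1 [dF [cf [fp lc]]]]]] := gc.
have Fb := @F_bounds _ _ _ gc.
move=> x y xy.
pose d := y - x.
pose Phi z := f x * F (z + d) - f y * F z.
have dPhi := @dshift _ F f (f x) (f y) d dF.
rewrite leNgt; apply/negP => H.
have Px : Phi x < 0.
  rewrite /Phi /d (_ : x + (y - x) = y); last by ring.
  lra.
have fyp := fp y; have fxp := fp x.
have ep : 0 < - Phi x / f y by rewrite divr_gt0 //; lra.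
have [z [zx Fz]] := @tail_Ny _ _ l0 _ ep x.
have [c /andP[zc cx] hc] := @mvt _ _ _ _ _ zx dPhi.
have hlc := @lc_prod _ f fp lc c x y (c + d) (ltW cx) (ltW xy) ltac:(rewrite /d; lra).
have : f y * F z < f y * (- Phi x / f y).
  by rewrite ltr_pM2l //; move: Fz => /ltr_normlP [_ ?].
have -> : f y * (- Phi x / f y) = - Phi x by field; lra.
have := Fb (z + d); move: hc; rewrite /Phi.
have : 0 <= (f x * f (c + d) - f y * f c) * (x - z) by apply: mulr_ge0; lra.
nra.
Qed.

Lemma ratio2 (R : realType) (F f : R -> R) : good_cdf F f ->
  forall x y, x < y -> (1 - F y) * f x <= (1 - F x) * f y.
Proof.
move=> gc; have [mon [l0 [l1 [dF [cf [fp lc]]]]]] := gc.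
have Fb := @F_bounds _ _ _ gc.
move=> x y xy.
pose d := y - x.
pose G z := f y * F (z + - d) - f x * F z.
have dG := @dshift _ F f (f y) (f x) (- d) dF.
rewrite leNgt; apply/negP => H.
have Gy : f y - f x < G y.
  rewrite /G /d (_ : y + - (y - x) = x); last by ring.
  lra.
have fyp := fp y; have fxp := fp x.
have ep : 0 < (G y - (f y - f x)) / f x by rewrite divr_gt0 //; lra.
have [z [yz Fz]] := @tail_y _ _ _ l1 _ ep y.
have [c /andP[yc cz] hc] := @mvt _ _ _ _ _ yz dG.
have hlc := @lc_prod _ f fp lc x y c (c + - d) (ltW xy) (ltW yc) ltac:(rewrite /d; lra).
have : f x * (1 - F z) < f x * ((G y - (f y - f x)) / f x).
  by rewrite ltr_pM2l //; move: Fz => /ltr_normlP [_ ?].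
have -> : f x * ((G y - (f y - f x)) / f x) = G y - (f y - f x) by field; lra.
have := Fb (z + - d); move: hc; rewrite /G.
have : 0 <= (f y * f (c + - d) - f x * f c) * (z - y) by apply: mulr_ge0; lra.
nra.
Qed.
Lemma dgs (R : realType) (F f : R -> R) (t s : R) :
  (forall z : R, is_derive z 1 F (f z)) ->
  forall k : R, is_derive k 1 (fun k : R => (t - k) * F k + s * k) ((t - k) * f k - F k + s).
Proof.
move=> dF k.
have h1 : is_derive k 1 (fun k : R => t - k) (0 - 1).
  exact: is_deriveB.
have h2 := is_deriveM h1 (dF k).
have h3 : is_derive k 1 (fun k : R => s * k) (s * 1).
  exact: is_deriveZ.
have h4 := is_deriveD h2 h3.
have e : (t - k) *: f k + F k *: (0 - 1) + s * 1 = (t - k) * f k - F k + s.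
  rewrite /GRing.scale /=; ring.
rewrite e in h4; exact: h4.
Qed.

Lemma g0_max (R : realType) (F f : R -> R) (t k0 : R) : good_cdf F f ->
  k0 = t - F k0 / f k0 -> forall k, (t - k) * F k <= (t - k0) * F k0.
Proof.
move=> gc; have [mon [l0 [l1 [dF [cf [fp lc]]]]]] := gc.
move=> hk0 k.
have fk0 := fp k0.
have Fk0 : F k0 = (t - k0) * f k0.
  rewrite {2}hk0; field; rewrite gt_eqF //.
have dg := @dgs _ F f t 0 dF.
case: (ltgtP k k0) => [kk0|k0k|->]; last by [].
- have [c /andP[kc ck0] hc] := @mvt _ _ _ _ _ kk0 dg.
  have r := @ratio1 _ _ _ gc c k0 ck0.
  rewrite Fk0 in r.
  have fcp := fp c.
  have h1 : F c <= (t - k0) * f c.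
    rewrite -(ler_pM2r fk0); lra.
  have : 0 <= ((t - c) * f c - F c + 0) * (k0 - k) by apply: mulr_ge0; nra.
  lra.
- have [c /andP[kc ck0] hc] := @mvt _ _ _ _ _ k0k dg.
  have r := @ratio1 _ _ _ gc k0 c kc.
  rewrite Fk0 in r.
  have fcp := fp c.
  have h1 : (t - k0) * f c <= F c.
    rewrite -(ler_pM2r fk0); lra.
  have : ((t - c) * f c - F c + 0) * (k - k0) <= 0 by apply: mulr_le0_ge0; nra.
  lra.
Qed.

Lemma g1_max (R : realType) (F f : R -> R) (t k1 : R) : good_cdf F f ->
  k1 = t + (1 - F k1) / f k1 -> forall k, (t - k) * F k + k <= (t - k1) * F k1 + k1.
Proof.
move=> gc; have [mon [l0 [l1 [dF [cf [fp lc]]]]]] := gc.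
move=> hk1 k.
have fk1 := fp k1.
have Fk1 : 1 - F k1 = (k1 - t) * f k1.
  rewrite {2}hk1; field; rewrite gt_eqF //.
have dg := @dgs _ F f t 1 dF.
case: (ltgtP k k1) => [kk1|k1k|->]; last by [].
- have [c /andP[kc ck1] hc] := @mvt _ _ _ _ _ kk1 dg.
  have r := @ratio2 _ _ _ gc c k1 ck1.
  rewrite Fk1 in r.
  have fcp := fp c.
  have h1 : (k1 - t) * f c <= 1 - F c.
    rewrite -(ler_pM2r fk1); lra.
  have : 0 <= ((t - c) * f c - F c + 1) * (k1 - k) by apply: mulr_ge0; nra.
  lra.
- have [c /andP[kc ck1] hc] := @mvt _ _ _ _ _ k1k dg.
  have r := @ratio2 _ _ _ gc k1 c kc.
  rewrite Fk1 in r.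
  have fcp := fp c.
  have h1 : 1 - F c <= (k1 - t) * f c.
    rewrite -(ler_pM2r fk1); lra.
  have : ((t - c) * f c - F c + 1) * (k - k1) <= 0 by apply: mulr_le0_ge0; nra.
  lra.
Qed.

Lemma max0_cases (R : realType) (x : R) :
  (0 <= x /\ Num.max x 0 = x) \/ (x < 0 /\ Num.max x 0 = 0).
Proof.
by case: (leP 0 x) => h; [left|right]; split => //.
Qed.

Arguments max0_cases {R}.

Lemma payoffE (R : realType) (F : R -> R) (t rh g r : R) :
  payoff F t rh g r = (t - r * rh) * F (r * rh) + Num.max (r * rh - g) 0.
Proof.
rewrite /payoff; case: ifP => h.
  rewrite max_l; last by rewrite subr_ge0.
  ring.
rewrite max_r; last by rewrite subr_le0 ltW // ltNge h.
ring.
Qed.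

Lemma key (R : realType) (F f : R -> R) (t k0 k1 g : R) : good_cdf F f ->
  k0 = t - F k0 / f k0 -> k1 = t + (1 - F k1) / f k1 ->
  forall k, (t - k) * F k + Num.max (k - g) 0 <=
    (t - kstar F t k0 k1 g) * F (kstar F t k0 k1 g) + Num.max (kstar F t k0 k1 g - g) 0.
Proof.
move=> gc hk0 hk1 k.
have G0 := @g0_max _ _ _ t k0 gc hk0.
have G1 := @g1_max _ _ _ t k1 gc hk1.
have a0 := G0 k; have a1 := G1 k.
rewrite /kstar; case: ifP => hth.
- have b1 := G0 k1.
  have [[? ->]|[? ->]] := max0_cases (k - g);
  have [[? ->]|[? ->]] := max0_cases (k1 - g); lra.
- move/negbT: hth; rewrite -ltNge => hth.
  have [[? ->]|[? ->]] := max0_cases (k - g);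
  have [[? ->]|[? ->]] := max0_cases (k0 - g); lra.
Qed.

Lemma mono_left (R : realType) (c k ks g gm : R) : k <= ks -> g <= gm ->
  c + Num.max (k - gm) 0 <= Num.max (ks - gm) 0 ->
  c + Num.max (k - g) 0 <= Num.max (ks - g) 0.
Proof.
move=> kks ggm.
have [[? ->]|[? ->]] := max0_cases (k - gm);
have [[? ->]|[? ->]] := max0_cases (ks - gm);
have [[? ->]|[? ->]] := max0_cases (k - g);
have [[? ->]|[? ->]] := max0_cases (ks - g); lra.
Qed.

Lemma mono_right (R : realType) (c k ks g gm : R) : ks <= k -> gm <= g ->
  c + Num.max (k - gm) 0 <= Num.max (ks - gm) 0 ->
  c + Num.max (k - g) 0 <= Num.max (ks - g) 0.
Proof.
move=> kks ggm.
have [[? ->]|[? ->]] := max0_cases (k - gm);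
have [[? ->]|[? ->]] := max0_cases (ks - gm);
have [[? ->]|[? ->]] := max0_cases (k - g);
have [[? ->]|[? ->]] := max0_cases (ks - g); lra.
Qed.

Lemma ftc_f (R : realType) (F f : R -> R) (a b : R) : good_cdf F f -> a < b ->
  (\int[@lebesgue_measure R]_(x in `[a, b]) (f x)%:E = (F b - F a)%:E)%E.
Proof.
move=> gc ab; have [mon [l0 [l1 [dF [cf [fp lc]]]]]] := gc.
have Fc : continuous F.
  move=> x; apply: differentiable_continuous; apply/derivable1_diffP.
  by have := dF x; case.
rewrite EFinB; apply: continuous_FTC2 => //.
- exact: continuous_subspaceT.
- split.
  + by move=> x _; have := dF x; case.
  + exact: cvg_at_right_filter (Fc a).
  + exact: cvg_at_left_filter (Fc b).
- move=> x _; rewrite derive1E; exact: derive_val.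
Qed.

Lemma int_ge (R : realType) (F f : R -> R) (S : set R) (a b : R) : good_cdf F f ->
  measurable S -> `[a, b] `<=` S -> a < b ->
  ((F b - F a)%:E <= \int[@lebesgue_measure R]_(x in S) (f x)%:E)%E.
Proof.
move=> gc mS sub ab; have [mon [l0 [l1 [dF [cf [fp lc]]]]]] := gc.
rewrite -(@ftc_f _ _ _ _ _ gc ab).
apply: ge0_subset_integral => //.
- apply: measurable_funS (_ : measurable setT) _ _ => //.
  apply/measurable_realfun.measurable_EFinP.
  exact: measurable_realfun.continuous_measurable_fun.
- by move=> x _; rewrite lee_fin ltW.
Qed.

Lemma lim_Ny (R : realType) (F : R -> R) (x0 l : R) (m : \bar R) :
  F x @[x --> -oo] --> (0:R) -> (forall a, a < x0 -> ((l - F a)%:E <= m)%E) ->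
  (l%:E <= m)%E.
Proof.
move=> l0; case: m => [x| |] H.
- rewrite lee_fin leNgt; apply/negP => hx.
  have [a [ax Fa]] := @tail_Ny _ _ l0 (l - x) ltac:(lra) x0.
  have := H a ax; rewrite lee_fin; move: Fa => /ltr_normlP [? ?] ?; lra.
- by rewrite leey.
- by have := H (x0 - 1) ltac:(lra).
Qed.

Lemma lim_y (R : realType) (F : R -> R) (x0 l : R) (m : \bar R) :
  F x @[x --> +oo] --> (1:R) -> (forall b, x0 < b -> ((F b - l)%:E <= m)%E) ->
  ((1 - l)%:E <= m)%E.
Proof.
move=> l1; case: m => [x| |] H.
- rewrite lee_fin leNgt; apply/negP => hx.
  have [a [ax Fa]] := @tail_y _ _ _ l1 (1 - l - x) ltac:(lra) x0.
  have := H a ax; rewrite lee_fin; move: Fa => /ltr_normlP [? ?] ?; lra.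
- by rewrite leey.
- by have := H (x0 + 1) ltac:(lra).
Qed.
Local Close Scope classical_set_scope.

Theorem proposition7 (R : realType) (d1 d0 phi t : R) (F f : R -> R)
    (k0 k1 gmu : R) :
  0 <= d1 <= 1 -> 0 <= d0 <= 1 ->
  rho d1 d0 phi != 0 ->
  0 <= t ->
  good_cdf F f ->
  1 / 2 < phi <= 1 ->
  k0 = t - F k0 / f k0 ->
  k1 = t + (1 - F k1) / f k1 ->
  F gmu = 1 / 2 ->
  let rstar := kstar F t k0 k1 gmu / rho d1 d0 phi in
  forall r : R, r != rstar ->
    ((1 / 2)%:E <= mass_prefer F f t (rho d1 d0 phi) rstar r)%E.
Proof.
move=> _ _ hrho _ gc _ hk0 hk1 hgmu rstar r _.
have [mon [l0 [l1 [dF [cf [fp lc]]]]]] := gc.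
rewrite /mass_prefer.
set rh := rho d1 d0 phi.
set ks := kstar F t k0 k1 gmu.
have rsE : rstar * rh = ks by rewrite /rstar divfK.
set k := r * rh.
have K := @key _ _ _ t k0 k1 gmu gc hk0 hk1 k.
rewrite -/ks in K.
set S := [set g | (payoff F t rh g r <= payoff F t rh g rstar)]%classic.
have SE : S = (setT `&` [set g | (t - k) * F k + Num.max (k - g) 0 <=
                                 (t - ks) * F ks + Num.max (ks - g) 0])%classic.
  rewrite setTI /S; apply: eq_set => g; by rewrite !payoffE rsE.
have mS : measurable S.
  rewrite SE; apply: measurable_fun_le => //.
  - apply: measurable_funD => //; apply: measurable_realfun.measurable_maxr => //.
    exact: measurable_funB.
  - apply: measurable_funD => //; apply: measurable_realfun.measurable_maxr => //.
    exact: measurable_funB.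
have [kks|kks] := leP k ks.
- apply: (@lim_Ny _ F gmu) => // a agmu.
  rewrite -hgmu.
  apply: int_ge => //.
  move=> g /=; rewrite in_itv /= => /andP[_ ggmu].
  rewrite SE /=; split => //.
  have := @mono_left _ ((t - k) * F k - (t - ks) * F ks) k ks g gmu kks ggmu ltac:(lra).
  lra.
- have -> : (1 / 2 : R) = 1 - 1 / 2 by field.
  apply: (@lim_y _ F gmu) => // b gmub.
  rewrite -hgmu.
  apply: int_ge => //.
  move=> g /=; rewrite in_itv /= => /andP[ggmu _].
  rewrite SE /=; split => //.
  have := @mono_right _ ((t - k) * F k - (t - ks) * F ks) k ks g gmu (ltW kks) ggmu ltac:(lra).
  lra.
Qed.
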